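(* The categories $\sigma\ell\mathbb{G}_u$ and $\mathcal{V}_{\sigma\ell\mathbb{G}_u}$ are isomorphic via the functor $U_u\colon\mathcal{V}_{\sigma\ell\mathbb{G}_u}\to\sigma\ell\mathbb{G}_u$ that forgets $\bigvee^-$ (keeping the $\ell$-group operations and interpreting the constant $1$ as the designated weak unit; identity on maps) and the functor $F_u\colon\sigma\ell\mathbb{G}_u\to\mathcal{V}_{\sigma\ell\mathbb{G}_u}$ that adds the operation $\bigvee^-(g,f_1,f_2,\dots):=\sup_{n\ge1}\{f_n\wedge g\}$ and interprets $1$ as the designated weak unit (identity on maps); both are well defined and mutually inverse. In particular the category of Dedekind $\sigma$-complete $\ell$-groups with weak unit is an infinitary variety. An element $1$ of an $\ell$-group $G$ is a weak (order) unit if $1\ge0$ and for all $f\in G$, $f\wedge1=0$ implies $f=0$. Dedekind $\sigma$-complete: every countable subset with an upper bound has a supremum. $\sigma$-continuous: preserves all existing countable suprema. $\sigma\ell\mathbb{G}_u$ is the category of Dedekind $\sigma$-complete $\ell$-groups with a designated weak unit, with $\sigma$-continuous $\ell$-morphisms preserving the designated weak unit. $\mathcal{V}_{\sigma\ell\mathbb{G}}$ is the variety of algebras $(G,0,+,-,\vee,\wedge,\bigvee^-)$, $\bigvee^-$ of countably infinite arity with $\bigvee_{n\ge1}^g f_n:=\bigvee^-(g,f_1,f_2,\dots)$, satisfying the $\ell$-group axioms and (A1) $\bigvee_{n\ge1}^g f_n=\bigvee_{n\ge1}^g(f_n\wedge g)$; (A2) $\bigvee_{n\ge1}^g f_n=(f_1\wedge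 g)\vee\bigvee^-(g,f_2,f_3,\dots)$; (A3) $\bigvee_{n\ge1}^g(f_n\wedge h)\le h$ ($a\le b$ meaning $a\wedge b=a$). $\mathcal{V}_{\sigma\ell\mathbb{G}_u}$ is the variety in the language of $\mathcal{V}_{\sigma\ell\mathbb{G}}$ plus a constant $1$, axiomatized by the axioms of $\mathcal{V}_{\sigma\ell\mathbb{G}}$ together with $\bigvee_{n\ge1}^{|f|}(|f|\wedge n1)=|f|$; its morphisms preserve all operations including $1$. *)

(* Defs.v *)
From Stdlib Require Import ClassicalEpsilon.

Record lgu_ops (T : Type) := LguOps {
  zero : T; add : T -> T -> T; opp : T -> T;
  join : T -> T -> T; meet : T -> T -> T; one : T }.
Arguments zero {T}. Arguments add {T}. Arguments opp {T}.
Arguments join {T}. Arguments meet {T}. Arguments one {T}.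
Arguments LguOps {T}.

Section LGroup.
Context {T : Type} (s : lgu_ops T).

Definition lgroup_axioms : Prop :=
  (forall x y z, add s x (add s y z) = add s (add s x y) z) /\
  (forall x y, add s x y = add s y x) /\
  (forall x, add s x (zero s) = x) /\
  (forall x, add s x (opp s x) = zero s) /\
  (forall x y z, join s x (join s y z) = join s (join s x y) z) /\
  (forall x y, join s x y = join s y x) /\
  (forall x y z, meet s x (meet s y z) = meet s (meet s x y) z) /\
  (forall x y, meet s x y = meet s y x) /\
  (forall x y, join s x (meet s x y) = x) /\
  (forall x y, meet s x (join s x y) = x) /\
  (forall x y z, add s x (join s y z) = join s (add s x y) (add s x z)).

Definition le (a b : T) : Prop := meet s a b = a.

Definition is_sup (f : nat -> T) (x : T) : Prop :=
  (forall n, le (f n) x) /\ (forall u, (forall n, le (f n) u) -> le x u).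

Definition dedekind_sigma_complete : Prop :=
  forall f : nat -> T, (exists u, forall n, le (f n) u) -> exists x, is_sup f x.

Definition weak_unit (u : T) : Prop :=
  le (zero s) u /\ forall f, meet s f u = zero s -> f = zero s.

Definition is_sigma_lgu : Prop :=
  lgroup_axioms /\ dedekind_sigma_complete /\ weak_unit (one s).

Definition absv (f : T) : T := join s f (opp s f).

Fixpoint nsmul (n : nat) (x : T) : T :=
  match n with O => zero s | S m => add s x (nsmul m x) end.

End LGroup.

Definition is_lhom {T1 T2 : Type} (s1 : lgu_ops T1) (s2 : lgu_ops T2)
    (h : T1 -> T2) : Prop :=
  h (zero s1) = zero s2 /\
  (forall x y, h (add s1 x y) = add s2 (h x) (h y)) /\
  (forall x, h (opp s1 x) = opp s2 (h x)) /\
  (forall x y, h (join s1 x y) = join s2 (h x) (h y)) /\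
  (forall x y, h (meet s1 x y) = meet s2 (h x) (h y)).

Definition sigma_continuous {T1 T2 : Type} (s1 : lgu_ops T1) (s2 : lgu_ops T2)
    (h : T1 -> T2) : Prop :=
  forall (f : nat -> T1) x, is_sup s1 f x -> is_sup s2 (fun n => h (f n)) (h x).

Definition hom_sigma_lgu {T1 T2 : Type} (s1 : lgu_ops T1) (s2 : lgu_ops T2)
    (h : T1 -> T2) : Prop :=
  is_lhom s1 s2 h /\ sigma_continuous s1 s2 h /\ h (one s1) = one s2.

(* Algebras in the language of V_{sigma lG_u}: l-group operations, constant 1,
   and the countably infinitary operation  bigv g (f_1, f_2, ...)  where the
   sequence f_1, f_2, ... is represented by f : nat -> T with f_{n+1} = f n. *)
Record V_ops (T : Type) := VOps { base : lgu_ops T; bigv : T -> (nat -> T) -> T }.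
Arguments base {T}. Arguments bigv {T}. Arguments VOps {T}.

Definition is_V {T : Type} (o : V_ops T) : Prop :=
  let s := base o in
  lgroup_axioms s /\
  (forall g f, bigv o g f = bigv o g (fun n => meet s (f n) g)) /\
  (forall g f, bigv o g f = join s (meet s (f 0) g) (bigv o g (fun n => f (S n)))) /\
  (forall g h f, le s (bigv o g (fun n => meet s (f n) h)) h) /\
  (forall f, bigv o (absv s f) (fun n => meet s (absv s f) (nsmul s (S n) (one s)))
             = absv s f).

Definition hom_V {T1 T2 : Type} (o1 : V_ops T1) (o2 : V_ops T2) (h : T1 -> T2) : Prop :=
  is_lhom (base o1) (base o2) h /\ h (one (base o1)) = one (base o2) /\
  (forall g f, h (bigv o1 g f) = bigv o2 (h g) (fun n => h (f n))).

(* The functor U_u on objects: forget bigv (identity on maps). *)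
Definition U_ob {T : Type} (o : V_ops T) : lgu_ops T := base o.

(* The functor F_u on objects: bigv(g, f_1, f_2, ...) := sup_n (f_n /\ g)
   (identity on maps).  The supremum is picked by Hilbert's epsilon; it is
   unique whenever it exists. *)
Definition F_ob {T : Type} (s : lgu_ops T) : V_ops T :=
  VOps s (fun g f =>
    epsilon (inhabits (zero s)) (fun x => is_sup s (fun n => meet s (f n) g) x)).

(* Main.v *)
Require Import Defs.
From Stdlib Require Import ClassicalEpsilon FunctionalExtensionality.

Section LG.
Context {T : Type} (s : lgu_ops T) (Hs : lgroup_axioms s).

Local Notation "x ⊕ y" := (add s x y) (at level 50, left associativity).
Local Notation "⊖ x" := (opp s x) (at level 35, right associativity).
Local Notation "x ⊔ y" := (join s x y) (at level 40, left associativity).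
Local Notation "x ⊓ y" := (meet s x y) (at level 40, left associativity).
Local Notation "x ≤ y" := (le s x y) (at level 70).
Local Notation "𝟎" := (zero s).

Lemma addA x y z : x ⊕ (y ⊕ z) = x ⊕ y ⊕ z. Proof. destruct Hs as (h&_). apply h. Qed.
Lemma addC x y : x ⊕ y = y ⊕ x. Proof. destruct Hs as (_&h&_). apply h. Qed.
Lemma add0r x : x ⊕ 𝟎 = x. Proof. destruct Hs as (_&_&h&_). apply h. Qed.
Lemma addNr x : x ⊕ ⊖ x = 𝟎. Proof. destruct Hs as (_&_&_&h&_). apply h. Qed.
Lemma joinA x y z : x ⊔ (y ⊔ z) = x ⊔ y ⊔ z. Proof. destruct Hs as (_&_&_&_&h&_). apply h. Qed.
Lemma joinC x y : x ⊔ y = y ⊔ x. Proof. destruct Hs as (_&_&_&_&_&h&_). apply h. Qed.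
Lemma meetA x y z : x ⊓ (y ⊓ z) = x ⊓ y ⊓ z. Proof. destruct Hs as (_&_&_&_&_&_&h&_). apply h. Qed.
Lemma meetC x y : x ⊓ y = y ⊓ x. Proof. destruct Hs as (_&_&_&_&_&_&_&h&_). apply h. Qed.
Lemma joinmeetK x y : x ⊔ (x ⊓ y) = x. Proof. destruct Hs as (_&_&_&_&_&_&_&_&h&_). apply h. Qed.
Lemma meetjoinK x y : x ⊓ (x ⊔ y) = x. Proof. destruct Hs as (_&_&_&_&_&_&_&_&_&h&_). apply h. Qed.
Lemma addJ x y z : x ⊕ (y ⊔ z) = (x ⊕ y) ⊔ (x ⊕ z). Proof. destruct Hs as (_&_&_&_&_&_&_&_&_&_&h). apply h. Qed.

Lemma meetI x : x ⊓ x = x.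
Proof. transitivity (x ⊓ (x ⊔ (x ⊓ x))); [rewrite joinmeetK; reflexivity | apply meetjoinK]. Qed.
Lemma joinI x : x ⊔ x = x.
Proof. transitivity (x ⊔ (x ⊓ (x ⊔ x))); [rewrite meetjoinK; reflexivity | apply joinmeetK]. Qed.

Lemma le_join a b : a ≤ b <-> a ⊔ b = b.
Proof.
  unfold le; split; intro H.
  - rewrite <- H. rewrite joinC, meetC. apply joinmeetK.
  - rewrite <- H. apply meetjoinK.
Qed.

Lemma le_refl a : a ≤ a. Proof. apply meetI. Qed.
Lemma le_trans a b c : a ≤ b -> b ≤ c -> a ≤ c.
Proof. unfold le; intros H1 H2. rewrite <- H1, <- meetA, H2. reflexivity. Qed.
Lemma le_antisym a b : a ≤ b -> b ≤ a -> a = b.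
Proof. unfold le; intros H1 H2. transitivity (a ⊓ b); [symmetry; exact H1 | rewrite meetC; exact H2]. Qed.
Lemma meet_lb_l a b : a ⊓ b ≤ a.
Proof. unfold le. rewrite meetC, meetA, meetI. reflexivity. Qed.
Lemma meet_lb_r a b : a ⊓ b ≤ b.
Proof. unfold le. rewrite <- meetA, meetI. reflexivity. Qed.
Lemma meet_glb w a b : w ≤ a -> w ≤ b -> w ≤ a ⊓ b.
Proof. unfold le; intros H1 H2. rewrite meetA, H1, H2. reflexivity. Qed.
Lemma join_ub_l a b : a ≤ a ⊔ b. Proof. apply meetjoinK. Qed.
Lemma join_ub_r a b : b ≤ a ⊔ b. Proof. rewrite joinC. apply meetjoinK. Qed.
Lemma join_lub a b c : a ≤ c -> b ≤ c -> a ⊔ b ≤ c.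
Proof.
  intros Ha Hb. apply le_join. rewrite <- joinA.
  rewrite (proj1 (le_join _ _) Hb), (proj1 (le_join _ _) Ha). reflexivity.
Qed.
Lemma meet_mono_r a b c : b ≤ c -> a ⊓ b ≤ a ⊓ c.
Proof. intro H. apply meet_glb; [apply meet_lb_l | eapply le_trans; [apply meet_lb_r | exact H]]. Qed.

Lemma add0l x : 𝟎 ⊕ x = x. Proof. rewrite addC. apply add0r. Qed.
Lemma addNl x : ⊖ x ⊕ x = 𝟎. Proof. rewrite addC. apply addNr. Qed.
Lemma addKl x y : ⊖ x ⊕ (x ⊕ y) = y. Proof. rewrite addA, addNl, add0l. reflexivity. Qed.
Lemma addKl' x y : x ⊕ (⊖ x ⊕ y) = y. Proof. rewrite addA, addNr, add0l. reflexivity. Qed.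
Lemma opp_uniq x y : x ⊕ y = 𝟎 -> y = ⊖ x.
Proof. intro H. rewrite <- (addKl x y), H. apply add0r. Qed.
Lemma oppK x : ⊖ ⊖ x = x. Proof. symmetry. apply opp_uniq. apply addNl. Qed.
Lemma opp0 : ⊖ 𝟎 = 𝟎. Proof. symmetry. apply opp_uniq. apply add0r. Qed.
Lemma subr0_eq x y : x ⊕ ⊖ y = 𝟎 -> x = y.
Proof. intro H. rewrite <- (oppK y). apply opp_uniq. rewrite addC. exact H. Qed.

Lemma le_add2l x a b : a ≤ b -> x ⊕ a ≤ x ⊕ b.
Proof. intro H. apply le_join. rewrite <- addJ, (proj1 (le_join _ _) H). reflexivity. Qed.
Lemma le_add2r x a b : a ≤ b -> a ⊕ x ≤ b ⊕ x.
Proof. intro H. rewrite (addC a), (addC b). apply le_add2l, H. Qed.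
Lemma le_add a b c d : a ≤ b -> c ≤ d -> a ⊕ c ≤ b ⊕ d.
Proof. intros H1 H2. eapply le_trans; [apply le_add2r, H1 | apply le_add2l, H2]. Qed.
Lemma le_add2l_inv x a b : x ⊕ a ≤ x ⊕ b -> a ≤ b.
Proof. intro H. rewrite <- (addKl x a), <- (addKl x b). apply le_add2l, H. Qed.
Lemma le_add2r_inv x a b : a ⊕ x ≤ b ⊕ x -> a ≤ b.
Proof. intro H. apply (le_add2l_inv x). rewrite (addC x a), (addC x b). exact H. Qed.

Lemma addM x y z : x ⊕ (y ⊓ z) = (x ⊕ y) ⊓ (x ⊕ z).
Proof.
  apply le_antisym.
  - apply meet_glb; apply le_add2l; [apply meet_lb_l | apply meet_lb_r].
  - set (w := (x ⊕ y) ⊓ (x ⊕ z)). rewrite <- (addKl' x w). apply le_add2l.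
    apply meet_glb.
    + rewrite <- (addKl x y). apply le_add2l. apply meet_lb_l.
    + rewrite <- (addKl x z). apply le_add2l. apply meet_lb_r.
Qed.
Lemma addM_r x y z : (y ⊓ z) ⊕ x = (y ⊕ x) ⊓ (z ⊕ x).
Proof. rewrite addC, addM, (addC x y), (addC x z). reflexivity. Qed.

Lemma le_opp a b : a ≤ b -> ⊖ b ≤ ⊖ a.
Proof.
  intro H. apply (le_add2l_inv (a ⊕ b)).
  replace (a ⊕ b ⊕ ⊖ b) with a by (rewrite <- addA, addNr, add0r; reflexivity).
  replace (a ⊕ b ⊕ ⊖ a) with b by (rewrite (addC a b), <- addA, addNr, add0r; reflexivity).
  exact H.
Qed.
Lemma le_opp_inv a b : ⊖ b ≤ ⊖ a -> a ≤ b.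
Proof. intro H. rewrite <- (oppK a), <- (oppK b). apply le_opp, H. Qed.

Lemma oppJ a b : ⊖ (a ⊔ b) = (⊖ a) ⊓ (⊖ b).
Proof.
  apply le_antisym.
  - apply meet_glb; apply le_opp; [apply join_ub_l | apply join_ub_r].
  - apply le_opp_inv. rewrite oppK. apply join_lub.
    + apply le_opp_inv. rewrite oppK. apply meet_lb_l.
    + apply le_opp_inv. rewrite oppK. apply meet_lb_r.
Qed.

Lemma le_addl_pos x c : 𝟎 ≤ c -> x ≤ x ⊕ c.
Proof. intro H. rewrite <- (add0r x) at 1. apply le_add2l, H. Qed.
Lemma le_addr_pos x c : 𝟎 ≤ c -> x ≤ c ⊕ x.
Proof. intro H. rewrite addC. apply le_addl_pos, H. Qed.

Lemma pos_meet_add a b c : 𝟎 ≤ a -> 𝟎 ≤ b -> 𝟎 ≤ c ->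
  a ⊓ (b ⊕ c) ≤ (a ⊓ b) ⊕ (a ⊓ c).
Proof.
  intros Ha Hb Hc. rewrite addM_r, !addM.
  repeat apply meet_glb.
  - eapply le_trans; [apply meet_lb_l | apply le_addl_pos, Ha].
  - eapply le_trans; [apply meet_lb_l | apply le_addl_pos, Hc].
  - eapply le_trans; [apply meet_lb_l | apply le_addr_pos, Hb].
  - apply meet_lb_r.
Qed.

Lemma nsmul_pos n b : 𝟎 ≤ b -> 𝟎 ≤ nsmul s n b.
Proof.
  intro H. induction n as [|n IH]; simpl. apply le_refl.
  rewrite <- (add0r 𝟎). apply le_add; assumption.
Qed.
Lemma nsmul_mono n a b : a ≤ b -> nsmul s n a ≤ nsmul s n b.
Proof. intro H. induction n as [|n IH]; simpl. apply le_refl. apply le_add; assumption. Qed.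

Lemma disjoint_mul a b : 𝟎 ≤ a -> 𝟎 ≤ b -> a ⊓ b = 𝟎 -> forall n, a ⊓ nsmul s n b = 𝟎.
Proof.
  intros Ha Hb Hab n. induction n as [|n IH]; simpl.
  - rewrite meetC. exact Ha.
  - apply le_antisym.
    + eapply le_trans. apply pos_meet_add; auto. apply nsmul_pos, Hb.
      rewrite Hab, IH, add0r. apply le_refl.
    + apply meet_glb. exact Ha. rewrite <- (add0r 𝟎). apply le_add. exact Hb. apply nsmul_pos, Hb.
Qed.

Lemma posE x : x ⊕ (⊖ x ⊔ 𝟎) = x ⊔ 𝟎.
Proof. rewrite addJ, addNr, add0r. apply joinC. Qed.

Lemma pos_neg_disj x : (x ⊔ 𝟎) ⊓ (⊖ x ⊔ 𝟎) = 𝟎.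
Proof.
  rewrite <- posE. rewrite (addC x). rewrite <- (add0r (⊖ x ⊔ 𝟎)) at 2.
  rewrite <- addM.
  replace (x ⊓ 𝟎) with (⊖ (⊖ x ⊔ 𝟎)) by (rewrite oppJ, oppK, opp0; reflexivity).
  apply addNr.
Qed.

Lemma abs_pos a : 𝟎 ≤ a -> absv s a = a.
Proof.
  intro H. unfold absv. rewrite joinC. apply le_join.
  apply le_trans with 𝟎; [|exact H]. rewrite <- opp0. apply le_opp, H.
Qed.

Lemma abs_ge0 x : 𝟎 ≤ absv s x.
Proof.
  unfold absv. set (a := x ⊔ ⊖ x).
  assert (Ha2 : 𝟎 ≤ a ⊕ a).
  { rewrite <- (addNr x). apply le_add; [apply join_ub_l | apply join_ub_r]. }
  assert (E : (a ⊓ 𝟎) ⊕ (a ⊓ 𝟎) = ((a ⊕ a) ⊓ a) ⊓ (a ⊓ 𝟎)).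
  { rewrite addM, (addC (a ⊓ 𝟎) a), addM, !add0r. reflexivity. }
  assert (Hm : (a ⊓ 𝟎) ⊕ 𝟎 ≤ (a ⊓ 𝟎) ⊕ (a ⊓ 𝟎)).
  { rewrite E, add0r. apply meet_glb; [apply meet_glb|apply le_refl].
    - eapply le_trans; [apply meet_lb_r | exact Ha2].
    - apply meet_lb_l. }
  apply le_add2l_inv in Hm.
  apply le_antisym in Hm; [|apply meet_lb_r].
  unfold le. rewrite meetC. exact Hm.
Qed.

Lemma is_sup_unique f x y : is_sup s f x -> is_sup s f y -> x = y.
Proof. intros [H1 H2] [H3 H4]. apply le_antisym; auto. Qed.

End LG.

Lemma is_sup_ext {T} (s : lgu_ops T) f g x :
  (forall n, f n = g n) -> is_sup s f x -> is_sup s g x.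
Proof. intros H. replace g with f by (apply functional_extensionality; exact H). auto. Qed.

Section Arch.
Context {T : Type} (s : lgu_ops T) (Hs : lgroup_axioms s)
  (Hc : dedekind_sigma_complete s) (Hw : weak_unit s (one s)).

Local Notation "x ⊕ y" := (add s x y) (at level 50, left associativity).
Local Notation "⊖ x" := (opp s x) (at level 35, right associativity).
Local Notation "x ⊓ y" := (meet s x y) (at level 40, left associativity).
Local Notation "x ≤ y" := (le s x y) (at level 70).
Local Notation "𝟎" := (zero s).
Local Notation "𝟏" := (one s).

Lemma arch e b : 𝟎 ≤ e -> (forall k, nsmul s k e ≤ b) -> e = 𝟎.
Proof.
  intros He Hb.
  destruct (Hc (fun k => nsmul s k e)) as [z [Hz1 Hz2]]. exists b; exact Hb.
  assert (H1 : z ≤ ⊖ e ⊕ z).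
  { apply Hz2. intro n. rewrite <- (addKl s Hs e (nsmul s n e)).
    apply le_add2l; auto. exact (Hz1 (S n)). }
  assert (H2 : e ⊕ z ≤ 𝟎 ⊕ z).
  { rewrite add0l by auto. rewrite <- (addKl' s Hs e z) at 2. apply le_add2l; auto. }
  apply le_add2r_inv in H2; auto.
  apply (le_antisym s Hs); auto.
Qed.

Lemma sup_unit a : 𝟎 ≤ a -> is_sup s (fun n => a ⊓ nsmul s (S n) 𝟏) a.
Proof.
  intros Ha. destruct Hw as [H1 Hw'].
  destruct (Hc (fun n => a ⊓ nsmul s (S n) 𝟏)) as [s0 Hs0].
  { exists a. intro n. cbv beta. apply meet_lb_l; auto. }
  assert (Hs0a : s0 ≤ a) by (apply (proj2 Hs0); intro; cbv beta; apply meet_lb_l; auto).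
  set (d := a ⊕ ⊖ s0).
  assert (Hd : 𝟎 ≤ d).
  { unfold d. rewrite <- (addNr s Hs s0). apply le_add2r; auto. }
  set (e := d ⊓ 𝟏).
  assert (He : 𝟎 ≤ e) by (apply meet_glb; auto).
  assert (Hk : forall k, a ⊓ nsmul s k 𝟏 ≤ s0).
  { intros [|k].
    - simpl. eapply (le_trans s Hs); [apply meet_lb_r; auto|].
      eapply (le_trans s Hs); [|exact (proj1 Hs0 0)]. simpl.
      apply meet_glb; auto. rewrite add0r; auto.
    - exact (proj1 Hs0 k). }
  assert (Hm : forall k, nsmul s k e ≤ a ⊓ nsmul s k 𝟏).
  { induction k as [|k IH]; simpl.
    - apply meet_glb; auto. apply le_refl; auto.
    - apply meet_glb; auto.
      + eapply (le_trans s Hs). apply le_add2l; [auto | exact IH].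
        replace a with (d ⊕ s0) at 2 by (unfold d; rewrite <- addA, addNl, add0r; auto).
        apply le_add; auto. apply meet_lb_l; auto.
      + apply le_add; auto. apply meet_lb_r; auto.
        eapply (le_trans s Hs); [exact IH | apply meet_lb_r; auto]. }
  assert (He0 : e = 𝟎).
  { apply (arch e a He). intro k. eapply (le_trans s Hs); [apply Hm | apply meet_lb_l; auto]. }
  apply Hw' in He0. unfold d in He0. apply subr0_eq in He0; auto.
  revert Hs0. rewrite <- He0. auto.
Qed.
End Arch.

Section VSec.
Context {T : Type} (o : V_ops T) (Ho : is_V o).

Local Notation s := (base o).
Let Hs : lgroup_axioms s := proj1 Ho.

Lemma bigv_sup g f : is_sup s (fun n => meet s (f n) g) (bigv o g f).
Proof.
  pose proof Ho as (_&A1&A2&A3&_). split.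
  - intro n. revert f. induction n as [|n IH]; intro f; cbv beta.
    + rewrite A2. apply join_ub_l; exact Hs.
    + rewrite A2. eapply (le_trans s Hs); [exact (IH (fun n => f (S n))) | apply join_ub_r; exact Hs].
  - intros u Hu. rewrite A1.
    replace (fun n => meet s (f n) g) with (fun n => meet s (meet s (f n) g) u)
      by (apply functional_extensionality; intro n; apply Hu).
    apply A3.
Qed.

Lemma V_sigma : is_sigma_lgu s.
Proof.
  split; [exact Hs|]. split.
  - intros f [u Hu]. exists (bigv o u f). eapply is_sup_ext; [|apply bigv_sup].
    intro n. apply Hu.
  - pose proof Ho as (_&_&_&_&Hunit).
    set (x := one s).
    assert (Hone : le s (zero s) x).
    { set (p := join s (opp s x) (zero s)).
      assert (Hp : le s (zero s) p) by (apply join_ub_r; exact Hs).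
      assert (Hap : absv s p = p) by (apply abs_pos; assumption).
      assert (Hpx : meet s p (join s x (zero s)) = zero s)
        by (rewrite meetC by exact Hs; apply pos_neg_disj; exact Hs).
      assert (Hxp : le s (zero s) (join s x (zero s))) by (apply join_ub_r; exact Hs).
      pose proof (bigv_sup (absv s p) (fun n => meet s (absv s p) (nsmul s (S n) (one s)))) as Hsup.
      rewrite Hunit, Hap in Hsup.
      assert (Hp0 : le s p (zero s)).
      { apply (proj2 Hsup). intro n. cbv beta.
        eapply (le_trans s Hs); [apply meet_lb_l; exact Hs|].
        rewrite <- (disjoint_mul s Hs p (join s x (zero s)) Hp Hxp Hpx (S n)).
        apply meet_mono_r; [exact Hs|]. apply nsmul_mono; [exact Hs|].
        apply join_ub_l; exact Hs. }
      assert (E : p = zero s) by (apply (le_antisym s Hs); assumption).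
      assert (E2 : meet s x (zero s) = opp s p)
        by (unfold p; rewrite oppJ, oppK, opp0 by exact Hs; reflexivity).
      unfold le. rewrite meetC by exact Hs. rewrite E2, E. apply opp0; exact Hs. }
    split; [exact Hone|].
    intros f Hf.
    assert (Hf0 : le s (zero s) f)
      by (rewrite <- Hf; apply meet_lb_l; exact Hs).
    pose proof (bigv_sup (absv s f) (fun n => meet s (absv s f) (nsmul s (S n) (one s)))) as Hsup.
    rewrite Hunit, (abs_pos s Hs f Hf0) in Hsup.
    assert (Hsup' : is_sup s (fun _ => zero s) f).
    { eapply is_sup_ext; [|exact Hsup]. intro n. cbv beta.
      rewrite (disjoint_mul s Hs f (one s) Hf0 Hone Hf (S n)).
      exact Hf0. }
    apply (is_sup_unique s Hs (fun _ => zero s)); [exact Hsup'|].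
    split; [intro; apply le_refl; exact Hs | intros u Hu; exact (Hu 0)].
Qed.
End VSec.

Section FSec.
Context {T : Type} (s : lgu_ops T) (Hs : is_sigma_lgu s).

Lemma epsF g f : is_sup s (fun n => meet s (f n) g) (bigv (F_ob s) g f).
Proof.
  destruct Hs as (HL & Hc & _). simpl. apply epsilon_spec.
  apply Hc. exists g. intro n. apply meet_lb_r; exact HL.
Qed.

Lemma F_V : is_V (F_ob s).
Proof.
  destruct Hs as (HL & Hc & Hw).
  split; [exact HL|]. split; [|split; [|split]].
  - intros g f. apply (is_sup_unique s HL (fun n => meet s (f n) g)); [apply epsF|].
    eapply is_sup_ext; [|apply epsF]. intro n. cbv beta.
    rewrite <- meetA, meetI by exact HL. reflexivity.
  - intros g f. apply (is_sup_unique s HL (fun n => meet s (f n) g)); [apply epsF|].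
    pose proof (epsF g (fun n => f (S n))) as [U L]. simpl base. split.
    + intros [|n].
      * apply join_ub_l; exact HL.
      * eapply (le_trans s HL); [exact (U n)| apply join_ub_r; exact HL].
    + intros u Hu. apply join_lub; [exact HL | exact (Hu 0) |].
      apply L. intro n. exact (Hu (S n)).
  - intros g h f. apply (proj2 (epsF g _)). intro n. cbv beta.
    eapply (le_trans s HL); [apply meet_lb_l; exact HL | apply meet_lb_r; exact HL].
  - intros f. simpl base.
    apply (is_sup_unique s HL (fun n => meet s (absv s f) (nsmul s (S n) (one s)))).
    + eapply is_sup_ext; [|apply epsF]. intro n. cbv beta. apply meet_lb_l; exact HL.
    + apply sup_unit; auto. apply abs_ge0; exact HL.
Qed.
End FSec.

Theorem mainTheorem2 :
  (* U_u is well defined on objects and maps *)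
  (forall (T : Type) (o : V_ops T), is_V o -> is_sigma_lgu (U_ob o)) /\
  (forall (T1 T2 : Type) (o1 : V_ops T1) (o2 : V_ops T2) (h : T1 -> T2),
      is_V o1 -> is_V o2 -> hom_V o1 o2 h -> hom_sigma_lgu (U_ob o1) (U_ob o2) h) /\
  (* F_u is well defined on objects and maps *)
  (forall (T : Type) (s : lgu_ops T), is_sigma_lgu s -> is_V (F_ob s)) /\
  (forall (T1 T2 : Type) (s1 : lgu_ops T1) (s2 : lgu_ops T2) (h : T1 -> T2),
      is_sigma_lgu s1 -> is_sigma_lgu s2 -> hom_sigma_lgu s1 s2 h ->
      hom_V (F_ob s1) (F_ob s2) h) /\
  (* mutually inverse (on maps both are the identity) *)
  (forall (T : Type) (s : lgu_ops T), is_sigma_lgu s -> U_ob (F_ob s) = s) /\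
  (forall (T : Type) (o : V_ops T), is_V o -> F_ob (U_ob o) = o).
Proof.
  split; [|split; [|split; [|split; [|split]]]].
  - intros T o Ho. exact (V_sigma o Ho).
  - intros T1 T2 o1 o2 h H1 H2 [Hl [Hone Hb]]. unfold U_ob.
    split; [exact Hl|]. split; [|exact Hone].
    intros f x Hx.
    assert (E : bigv o1 x f = x).
    { apply (is_sup_unique (base o1) (proj1 H1) (fun n => meet (base o1) (f n) x)).
      - apply bigv_sup; exact H1.
      - eapply is_sup_ext; [|exact Hx]. intro n. symmetry. apply (proj1 Hx). }
    rewrite <- E, Hb.
    eapply is_sup_ext; [|apply bigv_sup; exact H2]. intro n. cbv beta.
    destruct Hl as (_&_&_&_&Hm). rewrite <- Hm. f_equal. apply (proj1 Hx).
  - intros T s Hs. exact (F_V s Hs).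
  - intros T1 T2 s1 s2 h H1 H2 [Hl [Hc Hone]].
    split; [exact Hl|]. split; [exact Hone|].
    intros g f.
    apply (is_sup_unique s2 (proj1 H2) (fun n => meet s2 (h (f n)) (h g))).
    + eapply is_sup_ext; [|apply Hc; apply (epsF s1 H1 g f)].
      intro n. cbv beta. destruct Hl as (_&_&_&_&Hm). apply Hm.
    + apply (epsF s2 H2 (h g) (fun n => h (f n))).
  - intros T s Hs. reflexivity.
  - intros T o Ho. pose proof (V_sigma o Ho) as Hs.
    destruct o as [b bv]. unfold F_ob, U_ob in *. simpl in *. f_equal.
    apply functional_extensionality; intro g.
    apply functional_extensionality; intro f.
    apply (is_sup_unique b (proj1 Hs) (fun n => meet b (f n) g)).
    + apply (epsF b Hs g f).
    + apply (bigv_sup (VOps b bv) Ho g f).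
Qed.
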